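(* Let $M$ be an even positive integer, $m=\lceil\log_2M\rceil$, and let $h_0,\dots,h_{M-1}$ be the filter coefficients of a wavelet of order $M$, with $h:=\sum_{\ell=0}^{M-1}|h_\ell|$. Then: (i) an $m$-qubit unitary LINPREP with $\mathrm{LINPREP}|0^m\rangle=\sum_{\ell=0}^{M-1}h_\ell|\ell\rangle$ can be executed using $\mathcal{O}(M\log_2M)$ elementary gates and $\lceil\log_2M\rceil$ borrowed qubits; (ii) $m$-qubit unitaries PREP and UNPREP with $\mathrm{PREP}|0^m\rangle=\frac{1}{\sqrt h}\sum_{\ell=0}^{M-1}\sqrt{|h_\ell|}\,|\ell\rangle$ and $\mathrm{UNPREP}^\dagger|0^m\rangle=\frac{1}{\sqrt h}\sum_{\ell=0}^{M-1}\mathrm{sign}(h_\ell)\sqrt{|h_\ell|}\,|\ell\rangle$ can each be executed using $\mathcal{O}(M^{3/2})$ elementary gates and one ancilla qubit.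
   Context: Wavelet of order $M$: real filter coefficients $h_0,\dots,h_{M-1}$ with $\sum_\ell h_\ell=\sqrt2$ and $\sum_\ell h_\ell^2=1$ (coming from an orthonormal wavelet). Elementary gates include arbitrary single-qubit gates (rotations with classically precomputed angles) and CNOT. An ancilla qubit starts and ends in $|0\rangle$; a borrowed qubit may start in any state and is returned to its original state. *)

(* Defs.v *)
From HB Require Import structures.
From mathcomp Require Import all_boot all_order all_algebra.
From mathcomp Require Import complex.
Set Implicit Arguments. Unset Strict Implicit. Unset Printing Implicit Defensive.
Import Order.TTheory GRing.Theory Num.Theory.
Local Open Scope ring_scope.

Section Quantum.
Variable R : rcfType.
Local Notation C := (R[i]).

(* bit q of the basis index k (qubit q <-> binary digit q of k) *)
Definition bit (k q : nat) : bool := odd (k %/ 2 ^ q)%N.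
Definition clrbit (k q : nat) : nat := (k - (bit k q) * 2 ^ q)%N.
Definition flipbit (k q : nat) : nat := if bit k q then (k - 2 ^ q)%N else (k + 2 ^ q)%N.

Definition adjmx (p q : nat) (A : 'M[C]_(p, q)) : 'M[C]_(q, p) :=
  (map_mx (@conjc R) A)^T.
Definition is_unitary_mx (p : nat) (U : 'M[C]_p) : Prop := U *m adjmx U = 1%:M.

Definition ket (n k : nat) : 'cV[C]_(2 ^ n) := \col_i (((i : nat) == k)%:R).

Inductive gate (n : nat) :=
| G1 of 'I_n & 'M[C]_2
| CNOT of 'I_n & 'I_n.        (* CNOT (control, target) *)

Definition gate_ok (n : nat) (g : gate n) : Prop :=
  match g with
  | G1 _ U => is_unitary_mx U
  | CNOT c t => c <> t
  end.

Definition gate_mx (n : nat) (g : gate n) : 'M[C]_(2 ^ n) :=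
  match g with
  | G1 q U => \matrix_(r, c)
      (if clrbit r q == clrbit c q
       then U (inord (bit r q)) (inord (bit c q)) else 0)
  | CNOT a t => \matrix_(r, c)
      (((r : nat) == (if bit c a then flipbit c t else (c : nat)))%:R)
  end.

(* a circuit is a list of gates, the head being applied first *)
Definition circuit (n : nat) := seq (gate n).
Definition circuit_ok (n : nat) (c : circuit n) : Prop :=
  foldr (fun g P => gate_ok g /\ P) True c.
Definition circuit_mx (n : nat) (c : circuit n) : 'M[C]_(2 ^ n) :=
  foldl (fun acc g => gate_mx g *m acc) 1%:M c.

(* The circuit c on m + b qubits implements the m-qubit unitary U on the low
   m qubits using b borrowed qubits (the high b qubits): on every basis state
   |x>|y> it acts as (U|x>)|y>, i.e. circuit_mx c = U (x) I. *)
Definition implements_borrowed (m b : nat) (c : circuit (m + b))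
    (U : 'M[C]_(2 ^ m)) : Prop :=
  forall (x : 'I_(2 ^ m)) (y : nat), (y < 2 ^ b)%N ->
    circuit_mx c *m ket (m + b) (x + 2 ^ m * y)%N
    = \sum_(x' < 2 ^ m) U x' x *: ket (m + b) (x' + 2 ^ m * y)%N.

(* The circuit c on m + 1 qubits implements U with one ancilla (the high
   qubit), which starts and ends in |0>. *)
Definition implements_ancilla (m : nat) (c : circuit (m + 1))
    (U : 'M[C]_(2 ^ m)) : Prop :=
  forall x : 'I_(2 ^ m),
    circuit_mx c *m ket (m + 1) x
    = \sum_(x' < 2 ^ m) U x' x *: ket (m + 1) x'.

Definition wavelet_filter (M : nat) (h : 'I_M -> R) : Prop :=
  \sum_(l < M) h l = Num.sqrt 2 /\ \sum_(l < M) h l ^+ 2 = 1.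

End Quantum.

(* Main.v *)
Require Import Defs.
From HB Require Import structures.
From mathcomp Require Import all_boot all_order all_algebra.
From mathcomp Require Import complex.
From mathcomp Require Import zify ring lra.
Set Implicit Arguments. Unset Strict Implicit. Unset Printing Implicit Defensive.
Import Order.TTheory GRing.Theory Num.Theory.

Module Part1.

Section Arith.

Lemma decomp_bit k t :
  k = (k %% 2 ^ t + 2 ^ t * (bit k t + 2 * (k %/ 2 ^ t.+1)))%N.
Proof.
rewrite /bit expnSr divnMA.
have h x : (odd x + 2 * (x %/ 2) = x)%N by rewrite {3}(divn_eq x 2) modn2; lia.
by rewrite h mulnC addnC -divn_eq.
Qed.

Definition mk t r (b : bool) A := (r + 2 ^ t * (b + 2 * A))%N.

Lemma mk_div t r (b : bool) A : (r < 2 ^ t)%N -> (mk t r b A %/ 2 ^ t = b + 2 * A)%N.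
Proof.
move=> hr; rewrite /mk addnC mulnC divnMDl ?expn_gt0 // divn_small // addn0 //.
Qed.

Lemma mk_mod t r (b : bool) A : (r < 2 ^ t)%N -> (mk t r b A %% 2 ^ t = r)%N.
Proof.
move=> hr; rewrite /mk addnC mulnC modnMDl modn_small //.
Qed.

Lemma mk_bit t r (b : bool) A : (r < 2 ^ t)%N -> bit (mk t r b A) t = b.
Proof.
move=> hr; rewrite /bit mk_div // oddD oddM /=; by case: b.
Qed.

Lemma mk_hi t r (b : bool) A : (r < 2 ^ t)%N -> (mk t r b A %/ 2 ^ t.+1 = A)%N.
Proof.
move=> hr; rewrite expnS mulnC divnMA mk_div //.
rewrite addnC mulnC divnMDl // divn_small ?addn0 //; by case: b.
Qed.

Lemma mk_bit_lo t r (b : bool) A a : (a < t)%N -> (r < 2 ^ t)%N ->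
  bit (mk t r b A) a = bit r a.
Proof.
move=> ha hr; rewrite /bit /mk.
have -> : (2 ^ t = 2 ^ (t - a) * 2 ^ a)%N by rewrite -expnD subnK // ltnW.
rewrite mulnAC divnDMl ?expn_gt0 //.
rewrite oddD oddM.
have -> : odd (2 ^ (t - a)) = false by rewrite oddX /= subn_eq0 leqNgt ha.
rewrite /=. by rewrite addbF.
Qed.

Lemma mk_bit_hi t r (b : bool) A a : (t < a)%N -> (r < 2 ^ t)%N ->
  bit (mk t r b A) a = bit A (a - t.+1).
Proof.
move=> ha hr; rewrite /bit.
have -> : (2 ^ a = 2 ^ t.+1 * 2 ^ (a - t.+1))%N by rewrite -expnD subnKC.
by rewrite divnMA mk_hi.
Qed.

Lemma mk_decomp k t : k = mk t (k %% 2 ^ t) (bit k t) (k %/ 2 ^ t.+1).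
Proof. by rewrite /mk -decomp_bit. Qed.

Lemma mk_lt t r (b : bool) A N : (t < N)%N -> (r < 2 ^ t)%N ->
  (A < 2 ^ (N - t.+1))%N -> (mk t r b A < 2 ^ N)%N.
Proof.
move=> htN hr hA.
have e : (2 ^ N = 2 ^ t * 2 * 2 ^ (N - t.+1))%N by rewrite -expnSr -expnD subnKC.
rewrite e /mk.
set P := (2 ^ t)%N in hr *; set Q := (2 ^ (N - t.+1))%N in hA *.
have h1 : (P * (2 * A.+1) <= P * 2 * Q)%N by rewrite -mulnA; apply: leq_mul => //; apply: leq_mul.
case: b => /= ; lia.
Qed.

Lemma hi_lt k t N : (t < N)%N -> (k < 2 ^ N)%N -> (k %/ 2 ^ t.+1 < 2 ^ (N - t.+1))%N.
Proof.
move=> htN hk; rewrite ltn_divLR ?expn_gt0 // -expnD subnK //.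
Qed.

Lemma mod_lt k t : (k %% 2 ^ t < 2 ^ t)%N.
Proof. by rewrite ltn_mod expn_gt0. Qed.

Lemma flip_mk t r (b : bool) A : (r < 2 ^ t)%N -> flipbit (mk t r b A) t = mk t r (~~ b) A.
Proof.
move=> hr; rewrite /flipbit mk_bit // /mk.
case: b => /=; rewrite ?mulnDr ?muln1 ?muln0; lia.
Qed.

Lemma clr_mk t r (b : bool) A : (r < 2 ^ t)%N -> clrbit (mk t r b A) t = mk t r false A.
Proof.
move=> hr; rewrite /clrbit mk_bit // /mk.
case: b => /=; rewrite ?mulnDr ?muln1 ?muln0 ?mul1n ?mul0n; lia.
Qed.

Lemma flipbitE k t : flipbit k t = mk t (k %% 2 ^ t) (~~ bit k t) (k %/ 2 ^ t.+1).
Proof. by rewrite {1}(mk_decomp k t) flip_mk // mod_lt. Qed.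

Lemma clrbitE k t : clrbit k t = mk t (k %% 2 ^ t) false (k %/ 2 ^ t.+1).
Proof. by rewrite {1}(mk_decomp k t) clr_mk // mod_lt. Qed.

Lemma flipbitK k t : flipbit (flipbit k t) t = k.
Proof. by rewrite [flipbit k t]flipbitE flip_mk ?mod_lt // negbK -mk_decomp. Qed.

Lemma bit_flip k t : bit (flipbit k t) t = ~~ bit k t.
Proof. by rewrite flipbitE mk_bit ?mod_lt. Qed.

Lemma bit_flip_other k t a : a != t -> bit (flipbit k t) a = bit k a.
Proof.
move=> hne; rewrite flipbitE.
case: (ltngtP a t) hne => // h _.
  by rewrite mk_bit_lo ?mod_lt // [in RHS](mk_decomp k t) mk_bit_lo ?mod_lt.
by rewrite mk_bit_hi ?mod_lt // [in RHS](mk_decomp k t) mk_bit_hi ?mod_lt.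
Qed.

Lemma flip_lt k t N : (t < N)%N -> (k < 2 ^ N)%N -> (flipbit k t < 2 ^ N)%N.
Proof. by move=> ht hk; rewrite flipbitE mk_lt ?mod_lt ?hi_lt. Qed.

Lemma clr_lt k t N : (t < N)%N -> (k < 2 ^ N)%N -> (clrbit k t < 2 ^ N)%N.
Proof. by move=> ht hk; rewrite clrbitE mk_lt ?mod_lt ?hi_lt. Qed.

Lemma flip_neq k t : flipbit k t != k.
Proof.
apply/negP => /eqP e; have := bit_flip k t; rewrite e; by case: (bit k t).
Qed.

Lemma clr_flip k t : clrbit (flipbit k t) t = clrbit k t.
Proof. by rewrite flipbitE clr_mk ?mod_lt // clrbitE. Qed.

Lemma clr_eq k j t : clrbit j t = clrbit k t -> j = k \/ j = flipbit k t.
Proof.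
rewrite !clrbitE => e.
have er : (j %% 2 ^ t = k %% 2 ^ t)%N by rewrite -(mk_mod false (j %/ 2 ^ t.+1) (mod_lt j t)) e mk_mod ?mod_lt.
have eA : (j %/ 2 ^ t.+1 = k %/ 2 ^ t.+1)%N by rewrite -(mk_hi false (j %/ 2 ^ t.+1) (mod_lt j t)) e mk_hi ?mod_lt.
rewrite flipbitE (mk_decomp j t) er eA.
have hk := mk_decomp k t.
move: (bit j t) (bit k t) hk => bj bk.
set r := (k %% _)%N; set A := (k %/ _)%N => hk; clearbody r A; clear er eA e; subst k.
by case: bj; case: bk; auto.
Qed.

End Arith.

End Part1.
Import Part1.

Module Part2.
Local Open Scope ring_scope.

Section Gates.
Variable R : rcfType.
Local Notation C := (R[i]).

Lemma ketE n k (i : 'I_(2 ^ n)) j : ket R n k i j = ((i : nat) == k)%:R.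
Proof. by rewrite /ket mxE. Qed.

Lemma ket_out n k : (2 ^ n <= k)%N -> ket R n k = 0.
Proof.
move=> hk; apply/matrixP => i j; rewrite ketE mxE.
by have := ltn_ord i; case: eqP => // -> ; rewrite ltnNge hk.
Qed.

Lemma mul_ket p n (A : 'M[C]_(p, 2 ^ n)) k (hk : (k < 2 ^ n)%N) i j :
  (A *m ket R n k) i j = A i (Ordinal hk).
Proof.
rewrite mxE (bigD1 (Ordinal hk)) //= ketE eqxx mulr1 big1 ?addr0 // => l hl.
rewrite ketE; case: eqP => [e|]; last by rewrite mulr0.
by case/eqP: hl; apply: val_inj.
Qed.

Definition U' (U : 'M[C]_2) (i j : bool) : C := U (inord i) (inord j).

Lemma G1_ket n (q : 'I_n) U k : (k < 2 ^ n)%N ->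
  gate_mx (G1 q U) *m ket R n k =
  U' U (bit k q) (bit k q) *: ket R n k + U' U (~~ bit k q) (bit k q) *: ket R n (flipbit k q).
Proof.
move=> hk; apply/matrixP => i j.
rewrite mul_ket /= !mxE /U' /=.
case: (eqVneq (i : nat) k) => [->|hik].
  by rewrite eqxx mulr1 [k == _]eq_sym (negbTE (flip_neq _ _)) mulr0 addr0.
case: (eqVneq (i : nat) (flipbit k q)) => [hf|hf].
  by rewrite hf clr_flip eqxx bit_flip mulr1 mulr0 add0r.
rewrite mulr0 mulr0 addr0.
case: eqP => // /clr_eq; case=> e; [by rewrite e eqxx in hik| by rewrite e eqxx in hf].
Qed.

Definition cnot_map (a t k : nat) := if bit k a then flipbit k t else k.

Lemma CNOT_ket n (a t : 'I_n) k : (k < 2 ^ n)%N ->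
  gate_mx (CNOT R a t) *m ket R n k = ket R n (cnot_map a t k).
Proof.
move=> hk; apply/matrixP => i j.
by rewrite mul_ket /= !mxE.
Qed.

Lemma cnot_mapK (a t : nat) k : a != t -> cnot_map a t (cnot_map a t k) = k.
Proof.
move=> hat; rewrite /cnot_map.
case hb: (bit k a); last by rewrite hb.
by rewrite bit_flip_other // hb flipbitK.
Qed.

Lemma cnot_map_lt n (a t : 'I_n) k : (k < 2 ^ n)%N -> (cnot_map a t k < 2 ^ n)%N.
Proof. by rewrite /cnot_map; case: ifP => // _; apply: flip_lt. Qed.

Lemma foldl_circ n (c : circuit R n) (A : 'M[C]_(2 ^ n)) :
  foldl (fun acc g => gate_mx g *m acc) A c = circuit_mx c *m A.
Proof.
elim: c A => [|g c IH] A /=; first by rewrite /circuit_mx /= mul1mx.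
by rewrite /circuit_mx /= !IH mulmx1 mulmxA.
Qed.

Lemma circuit_mx_cat n (c1 c2 : circuit R n) :
  circuit_mx (c1 ++ c2) = circuit_mx c2 *m circuit_mx c1.
Proof. by rewrite /circuit_mx foldl_cat foldl_circ. Qed.

Lemma circuit_mx_cons n g (c : circuit R n) :
  circuit_mx (g :: c) = circuit_mx c *m gate_mx g.
Proof. by rewrite /circuit_mx /= foldl_circ mulmx1. Qed.

Lemma circuit_mx_rcons n g (c : circuit R n) :
  circuit_mx (rcons c g) = gate_mx g *m circuit_mx c.
Proof. by rewrite -cats1 circuit_mx_cat /circuit_mx /= mulmx1. Qed.

Lemma circuit_mx_nil n : circuit_mx (([::]) : circuit R n) = 1%:M.
Proof. by []. Qed.

Lemma circuit_ok_cat n (c1 c2 : circuit R n) :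
  circuit_ok (c1 ++ c2) <-> circuit_ok c1 /\ circuit_ok c2.
Proof.
elim: c1 => [|g c1 IH] /=; first by split => // -[].
by rewrite IH; split => [[? [? ?]]|[[? ?] ?]].
Qed.

End Gates.

End Part2.
Import Part2.

Module Part3.
Local Open Scope ring_scope.

Lemma bit_addhi r t X a : (a < t)%N -> bit (r + 2 ^ t * X) a = bit r a.
Proof.
move=> ha; rewrite /bit.
have -> : (2 ^ t = 2 ^ (t - a) * 2 ^ a)%N by rewrite -expnD subnK // ltnW.
rewrite mulnAC divnDMl ?expn_gt0 // oddD oddM.
have -> : odd (2 ^ (t - a)) = false by rewrite oddX /= subn_eq0 leqNgt ha.
by rewrite /= addbF.
Qed.

Lemma flip_addhi r t X a : (a < t)%N -> flipbit (r + 2 ^ t * X) a = (flipbit r a + 2 ^ t * X)%N.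
Proof.
move=> ha; rewrite /flipbit bit_addhi //.
case hb: (bit r a) => //; last by rewrite addnAC.
have : (2 ^ a <= r)%N.
  move: hb; rewrite /bit; case: (leqP (2 ^ a) r) => // h.
  by rewrite divn_small.
lia.
Qed.

Lemma cnot_addhi r t X a q : (a < t)%N -> (q < t)%N ->
  cnot_map a q (r + 2 ^ t * X) = (cnot_map a q r + 2 ^ t * X)%N.
Proof.
move=> ha hq; rewrite /cnot_map bit_addhi //; case: ifP => // _; exact: flip_addhi.
Qed.

Section Lift.
Variable R : rcfType.
Local Notation C := (R[i]).
Variables m b : nat.

Definition lift_gate (g : gate R m) : gate R (m + b) :=
  match g with
  | G1 q U => G1 (lshift b q) U
  | CNOT a t => CNOT R (lshift b a) (lshift b t)
  end.

Variable y : nat.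
Definition Lf (v : 'cV[C]_(2 ^ m)) : 'cV[C]_(2 ^ (m + b)) :=
  \sum_(x' < 2 ^ m) v x' 0 *: ket R (m + b) (x' + 2 ^ m * y).

Lemma Lf_add u w : Lf (u + w) = Lf u + Lf w.
Proof. by rewrite /Lf -big_split; apply: eq_bigr => i _; rewrite mxE scalerDl. Qed.

Lemma Lf_scale a u : Lf (a *: u) = a *: Lf u.
Proof. by rewrite /Lf scaler_sumr; apply: eq_bigr => i _; rewrite mxE scalerA. Qed.

Lemma Lf0 : Lf 0 = 0.
Proof. by rewrite /Lf big1 // => i _; rewrite mxE scale0r. Qed.

Lemma Lf_sum (I : finType) (F : I -> 'cV[C]_(2 ^ m)) : Lf (\sum_i F i) = \sum_i Lf (F i).
Proof. exact: (big_morph Lf Lf_add Lf0). Qed.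

Lemma Lf_ket p : (p < 2 ^ m)%N -> Lf (ket R m p) = ket R (m + b) (p + 2 ^ m * y).
Proof.
move=> hp; rewrite /Lf (bigD1 (Ordinal hp)) //= ketE eqxx scale1r big1 ?addr0 // => i hi.
rewrite ketE; case: eqP => [e|]; last by rewrite scale0r.
by case/eqP: hi; apply: val_inj.
Qed.

Lemma vec_decomp n (v : 'cV[C]_(2 ^ n)) : v = \sum_(x < 2 ^ n) v x 0 *: ket R n x.
Proof.
apply/matrixP => i j; rewrite (ord1 j) summxE (bigD1 i) //= !mxE eqxx mulr1 big1 ?addr0 // => l hl.
rewrite !mxE; case: eqP => [e|]; last by rewrite mulr0.
by case/eqP: hl; apply: val_inj.
Qed.

Hypothesis hy : (y < 2 ^ b)%N.

Lemma lt_low x : (x < 2 ^ m)%N -> (x + 2 ^ m * y < 2 ^ (m + b))%N.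
Proof.
move=> hx; rewrite expnD.
have : (y.+1 <= 2 ^ b)%N by [].
move: hx; set P := (2 ^ m)%N; set Q := (2 ^ b)%N => hx hyQ.
have : (P * y.+1 <= P * Q)%N by rewrite leq_mul2l hyQ orbT.
lia.
Qed.

Lemma lift_gate_ket (g : gate R m) x : (x < 2 ^ m)%N ->
  gate_mx (lift_gate g) *m ket R (m + b) (x + 2 ^ m * y) = Lf (gate_mx g *m ket R m x).
Proof.
move=> hx; case: g => [q U|a t]; rewrite [lift_gate _]/=.
  rewrite G1_ket ?lt_low // G1_ket // Lf_add !Lf_scale !Lf_ket ?flip_lt //.
  by rewrite /= bit_addhi // flip_addhi.
rewrite !CNOT_ket ?lt_low // Lf_ket ?cnot_map_lt //=.
by rewrite cnot_addhi.
Qed.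

Lemma lift_gate_Lf (g : gate R m) v :
  gate_mx (lift_gate g) *m Lf v = Lf (gate_mx g *m v).
Proof.
rewrite [in RHS](vec_decomp v) mulmx_sumr (mulmx_sumr (gate_mx g)) Lf_sum.
apply: eq_bigr => i _.
by rewrite -!scalemxAr lift_gate_ket // Lf_scale.
Qed.

Lemma lift_circuit_Lf (c : circuit R m) v :
  circuit_mx (map lift_gate c) *m Lf v = Lf (circuit_mx c *m v).
Proof.
elim/last_ind: c => [|c g IH]; first by rewrite /= !mul1mx.
by rewrite map_rcons !circuit_mx_rcons -!mulmxA IH lift_gate_Lf.
Qed.

End Lift.

Lemma lift_ok (R : rcfType) m b (c : circuit R m) :
  circuit_ok c -> circuit_ok (map (@lift_gate R m b) c).
Proof.
elim: c => [|g c IH] //= [hg hc]; split; last exact: IH.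
case: g hg => [q U|a t] //= hat e; apply: hat; apply: val_inj.
by move: e => /(congr1 val).
Qed.

Lemma lift_implements_borrowed (R : rcfType) m b (c : circuit R m) :
  implements_borrowed (map (@lift_gate R m b) c) (circuit_mx c).
Proof.
move=> x y hy.
rewrite -(Lf_ket R b y (ltn_ord x)) (lift_circuit_Lf hy).
rewrite /Lf; apply: eq_bigr => i _; rewrite mul_ket.
by have -> : Ordinal (ltn_ord x) = x by apply: val_inj.
Qed.

Lemma lift_implements_ancilla (R : rcfType) m (c : circuit R m) :
  implements_ancilla (map (@lift_gate R m 1) c) (circuit_mx c).
Proof.
move=> x.
have := @lift_implements_borrowed R m 1 c x 0 isT.
rewrite muln0 addn0 => ->; apply: eq_bigr => i _; by rewrite ?muln0 ?addn0.
Qed.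

End Part3.
Import Part3.

Module Part4.
Local Open Scope ring_scope.

Section Unitary.
Variable R : rcfType.
Local Notation C := (R[i]).

Lemma adjmx_mul p q r (A : 'M[C]_(p, q)) (B : 'M[C]_(q, r)) :
  adjmx (A *m B) = adjmx B *m adjmx A.
Proof. by rewrite /adjmx map_mxM trmx_mul. Qed.

Lemma adjmxK p q (A : 'M[C]_(p, q)) : adjmx (adjmx A) = A.
Proof.
apply/matrixP => i j; rewrite /adjmx !mxE; exact: conjcK.
Qed.

Lemma adjmx1 n : adjmx (1%:M : 'M[C]_n) = 1%:M.
Proof. by rewrite /adjmx map_mx1 trmx1. Qed.

Lemma adjmxE p q (A : 'M[C]_(p, q)) i j : adjmx A i j = (A j i)^*%C.
Proof. by rewrite /adjmx !mxE. Qed.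

Lemma unitary_mul n (A B : 'M[C]_n) : is_unitary_mx A -> is_unitary_mx B ->
  is_unitary_mx (A *m B).
Proof.
rewrite /is_unitary_mx => hA hB.
by rewrite adjmx_mul mulmxA -(mulmxA A) hB mulmx1 hA.
Qed.

Lemma unitary_adj n (A : 'M[C]_n) : is_unitary_mx A -> is_unitary_mx (adjmx A).
Proof. by rewrite /is_unitary_mx adjmxK => /mulmx1C. Qed.

Lemma unitary1 n : is_unitary_mx (1%:M : 'M[C]_n).
Proof. by rewrite /is_unitary_mx adjmx1 mulmx1. Qed.

Lemma mx_ket_eq n (A B : 'M[C]_(2 ^ n)) :
  (forall k, (k < 2 ^ n)%N -> A *m ket R n k = B *m ket R n k) -> A = B.
Proof.
move=> h; apply/matrixP => i j.
have := congr1 (fun M : 'cV[C]_(2 ^ n) => M i 0) (h j (ltn_ord j)).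
rewrite /= !mul_ket; have -> : Ordinal (ltn_ord j) = j by apply: val_inj.
by [].
Qed.

Lemma U'M (U V : 'M[C]_2) i j : U' (U *m V) i j = U' U i false * U' V false j + U' U i true * U' V true j.
Proof.
rewrite /U' mxE big_ord_recr big_ord1 /=.
congr (_ * _ + _ * _); congr (_ _ _); apply: val_inj; by rewrite /= inordK.
Qed.

Lemma comb n (x y : 'cV[C]_n) a b c d e f :
  a *: (b *: x + c *: y) + d *: (e *: y + f *: x) = (a * b + d * f) *: x + (a * c + d * e) *: y.
Proof.
rewrite !scalerDr !scalerA !scalerDl -!addrA; congr (_ + _).
by rewrite [RHS]addrC addrA.
Qed.

Lemma G1_mul n (q : 'I_n) (U V : 'M[C]_2) :
  gate_mx (G1 q U) *m gate_mx (G1 q V) = gate_mx (G1 q (U *m V)).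
Proof.
apply: mx_ket_eq => k hk.
rewrite -mulmxA !G1_ket // mulmxDr -!scalemxAr !G1_ket ?flip_lt //.
rewrite bit_flip flipbitK negbK !U'M.
case: (bit k q) => /=; rewrite comb; congr (_ *: _ + _ *: _); ring.
Qed.

Lemma G1_one n (q : 'I_n) : gate_mx (G1 q (1%:M : 'M[C]_2)) = 1%:M.
Proof.
apply: mx_ket_eq => k hk; rewrite G1_ket // mul1mx /U' !mxE.
have e : forall b : bool, ((inord b : 'I_2) == inord (~~ b)) = false.
  by case; apply/negP => /eqP /(congr1 val); rewrite /= !inordK.
by rewrite [inord (~~ _) == _]eq_sym e eqxx scale1r scale0r addr0.
Qed.

Lemma G1_adj n (q : 'I_n) (U : 'M[C]_2) :
  adjmx (gate_mx (G1 q U)) = gate_mx (G1 q (adjmx U)).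
Proof.
apply/matrixP => i j; rewrite adjmxE !mxE eq_sym.
by case: ifP => _; rewrite ?conjc0 // adjmxE.
Qed.

Lemma CNOT_adj n (a t : 'I_n) : a != t ->
  adjmx (gate_mx (CNOT R a t)) = gate_mx (CNOT R a t).
Proof.
move=> hat; apply/matrixP => i j; rewrite adjmxE !mxE.
rewrite conjc_nat; congr (_%:R).
have := cnot_mapK (i : nat) hat; have := cnot_mapK (j : nat) hat.
rewrite /cnot_map => e1 e2.
case: eqP => [e|ne]; case: eqP => [e'|ne'] //.
  by case: ne'; rewrite -e2 e.
by case: ne; rewrite -e1 e'.
Qed.

Lemma CNOT_invol n (a t : 'I_n) : a != t ->
  gate_mx (CNOT R a t) *m gate_mx (CNOT R a t) = 1%:M.
Proof.
move=> hat; apply: mx_ket_eq => k hk.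
by rewrite -mulmxA !CNOT_ket ?cnot_map_lt // cnot_mapK // mul1mx.
Qed.

Lemma gate_unitary n (g : gate R n) : gate_ok g -> is_unitary_mx (gate_mx g).
Proof.
case: g => [q U|a t] /= h; rewrite /is_unitary_mx.
  by rewrite G1_adj G1_mul h G1_one.
have hat : a != t by apply/eqP.
by rewrite CNOT_adj // CNOT_invol.
Qed.

Lemma circuit_unitary n (c : circuit R n) : circuit_ok c -> is_unitary_mx (circuit_mx c).
Proof.
elim/last_ind: c => [|c g IH]; first by move=> _; exact: unitary1.
rewrite -cats1 => /circuit_ok_cat [hc [hg _]].
by rewrite cats1 circuit_mx_rcons; apply: unitary_mul; [apply: gate_unitary|apply: IH].
Qed.

Definition adj_gate n (g : gate R n) : gate R n :=
  match g with
  | G1 q U => G1 q (adjmx U)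
  | CNOT a t => CNOT R a t
  end.

Definition adj_circ n (c : circuit R n) : circuit R n := rev (map (@adj_gate n) c).

Lemma adj_gate_ok n (g : gate R n) : gate_ok g -> gate_ok (adj_gate g).
Proof. by case: g => [q U|a t] //=; apply: unitary_adj. Qed.

Lemma adj_gate_mx n (g : gate R n) : gate_ok g -> gate_mx (adj_gate g) = adjmx (gate_mx g).
Proof.
case: g => [q U|a t] /= h; first by rewrite G1_adj.
by rewrite CNOT_adj //; apply/eqP.
Qed.

Lemma adj_circ_mx n (c : circuit R n) : circuit_ok c ->
  circuit_mx (adj_circ c) = adjmx (circuit_mx c).
Proof.
elim: c => [|g c IH] /=; first by rewrite adjmx1.
move=> [hg hc]; rewrite /adj_circ /= rev_cons circuit_mx_rcons circuit_mx_cons.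
by rewrite adjmx_mul adj_gate_mx // -IH.
Qed.

Lemma adj_circ_ok n (c : circuit R n) : circuit_ok c -> circuit_ok (adj_circ c).
Proof.
elim: c => [|g c IH] //= [hg hc]; rewrite /adj_circ /= rev_cons -cats1.
apply/circuit_ok_cat; split; first exact: IH.
by split => //; apply: adj_gate_ok.
Qed.

Lemma size_adj_circ n (c : circuit R n) : size (adj_circ c) = size c.
Proof. by rewrite /adj_circ size_rev size_map. Qed.

End Unitary.

End Part4.
Import Part4.

Module Part5.
Local Open Scope ring_scope.

Section Rot.
Variable R : rcfType.
Local Notation C := (R[i]).

Definition unit2 (z : R * R) := z.1 ^+ 2 + z.2 ^+ 2 = 1.

Definition rotm (z : R * R) : 'M[C]_2 :=
  \matrix_(i, j) (if i == j then (z.1)%:C%C else if (i : nat) == 1%N then (z.2)%:C%C else (- z.2)%:C%C).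

Definition rf (z : R * R) (i j : bool) : C :=
  if i == j then (z.1)%:C%C else if i then (z.2)%:C%C else (- z.2)%:C%C.

Lemma U'_rot z i j : U' (rotm z) i j = rf z i j.
Proof.
rewrite /U' /rotm /rf mxE /=.
have -> : ((inord i : 'I_2) == inord j) = (i == j).
  by apply/eqP/eqP => [/(congr1 val)|->//]; rewrite /= !inordK //; case: i; case: j.
by rewrite inordK //; case: i.
Qed.

Lemma rotm_unitary z : unit2 z -> is_unitary_mx (rotm z).
Proof.
rewrite /unit2 => hz; rewrite /is_unitary_mx.
apply/matrixP => i j; rewrite !mxE big_ord_recr big_ord1 /= !adjmxE !mxE.
have h1 : (z.1 * z.1 + z.2 * z.2 = 1) by rewrite -hz; ring.
case: i => [[|[|i']] hi] //; case: j => [[|[|j']] hj] //=; rewrite ?conjc_real -?rmorphM -?rmorphD /=;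
  try (by rewrite ?mulrN ?mulNr ?h1); try (by congr (_%:C)%C; ring). all: simpc; first [by rewrite h1 | by rewrite mulrC subrr | by rewrite addrC h1].
Qed.

Definition cmul (z w : R * R) : R * R := (z.1 * w.1 - z.2 * w.2, z.1 * w.2 + z.2 * w.1).
Definition cconj (z : R * R) : R * R := (z.1, - z.2).
Definition sgn (x : R) : R := if x < 0 then -1 else 1.
Definition csqrt (z : R * R) : R * R :=
  (Num.sqrt ((1 + z.1) / 2), sgn z.2 * Num.sqrt ((1 - z.1) / 2)).

Lemma csqrtP z : unit2 z -> cmul (csqrt z) (csqrt z) = z /\ unit2 (csqrt z).
Proof.
case: z => c s; rewrite /unit2 /cmul /csqrt /= => hz.
have hc1 : 0 <= 1 + c by nra.
have hc2 : 0 <= 1 - c by nra.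
have hp : Num.sqrt ((1 + c) / 2) ^+ 2 = (1 + c) / 2 by rewrite sqr_sqrtr // divr_ge0.
have hq : Num.sqrt ((1 - c) / 2) ^+ 2 = (1 - c) / 2 by rewrite sqr_sqrtr // divr_ge0.
have hsg : sgn s ^+ 2 = 1 by rewrite /sgn; case: ifP => _; rewrite ?sqrrN expr1n.
have hpq : Num.sqrt ((1 + c) / 2) * Num.sqrt ((1 - c) / 2) = `|s| / 2.
  rewrite -sqrtrM ?divr_ge0 //.
  have -> : (1 + c) / 2 * ((1 - c) / 2) = (s / 2) ^+ 2.
    have -> : (1 + c) / 2 * ((1 - c) / 2) = (s / 2) ^+ 2 + (1 - (c ^+ 2 + s ^+ 2)) / 4 by field.
    by rewrite hz subrr mul0r addr0.
  by rewrite sqrtr_sqr normrM normfV [`|2|]ger0_norm.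
have hsabs : sgn s * `|s| = s.
  rewrite /sgn; case: ifP => h; first by rewrite ltr0_norm // mulN1r opprK.
  by rewrite ger0_norm ?mul1r // leNgt h.
move: hp hq hpq; set p := Num.sqrt ((1 + c) / 2); set q := Num.sqrt ((1 - c) / 2) => hp hq hpq.
split; last first.
  by rewrite exprMn hsg mul1r hp hq; field.
congr (_, _).
  have -> : p * p - sgn s * q * (sgn s * q) = p ^+ 2 - sgn s ^+ 2 * q ^+ 2 by ring.
  by rewrite hsg mul1r hp hq; field.
have -> : p * (sgn s * q) + sgn s * q * p = sgn s * (2 * (p * q)) by ring.
by rewrite hpq -[in RHS]hsabs; field.
Qed.

End Rot.

End Part5.
Import Part5.

Module Part6.

Definition ctl (a n k : nat) : nat := (k %/ 2 ^ a) %% 2 ^ n.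

Lemma mod2d X d : (0 < d)%N -> X %% (2 * d) = (odd X + 2 * ((X %/ 2) %% d))%N.
Proof.
move=> hd.
have hX : X = (X %/ 2 %/ d * (2 * d) + (odd X + 2 * (X %/ 2 %% d)))%N.
  rewrite {1}(divn_eq X 2) {1}(divn_eq (X %/ 2) d) modn2; lia.
rewrite {1}hX modnMDl modn_small //.
have := ltn_pmod (X %/ 2) hd; case: (odd X); lia.
Qed.

Lemma ctl_S a n k : ctl a n.+1 k = (bit k a + 2 * ctl a.+1 n k)%N.
Proof.
rewrite /ctl expnS mod2d ?expn_gt0 // /bit.
by rewrite expnSr divnMA.
Qed.

Lemma ctl_0 a k : ctl a 0 k = 0%N.
Proof. by rewrite /ctl expn0 modn1. Qed.

Lemma ctl_low a n k t : (a + n <= t)%N -> ctl a n k = ctl a n (k %% 2 ^ t).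
Proof.
move=> h; rewrite /ctl {1}(divn_eq k (2 ^ t)).
have -> : (2 ^ t = 2 ^ (t - a - n) * 2 ^ n * 2 ^ a)%N by rewrite -!expnD; congr (2 ^ _); lia.
rewrite mulnA divnMDl ?expn_gt0 // mulnA modnMDl //.
Qed.

Lemma ctl_flip a n k t : (a + n <= t)%N -> ctl a n (flipbit k t) = ctl a n k.
Proof.
move=> h; by rewrite (ctl_low _ h) [in RHS](ctl_low _ h) flipbitE mk_mod ?mod_lt.
Qed.

Lemma ctl_small n j : (j < 2 ^ n)%N -> ctl 0 n j = j.
Proof. by move=> hj; rewrite /ctl expn0 divn1 modn_small. Qed.

Lemma bit_small n j : (j < 2 ^ n)%N -> bit j n = false.
Proof. by move=> hj; rewrite /bit divn_small. Qed.

Lemma flip_small n j : (j < 2 ^ n)%N -> flipbit j n = (j + 2 ^ n)%N.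
Proof. by move=> hj; rewrite /flipbit bit_small. Qed.

Local Open Scope ring_scope.

Section UCR.
Variable R : rcfType.
Local Notation C := (R[i]).

Lemma unit_cmul (z w : R * R) : unit2 z -> unit2 w -> unit2 (cmul z w).
Proof.
rewrite /unit2 /cmul /= => hz hw.
have -> : (z.1 * w.1 - z.2 * w.2) ^+ 2 + (z.1 * w.2 + z.2 * w.1) ^+ 2 =
  (z.1 ^+ 2 + z.2 ^+ 2) * (w.1 ^+ 2 + w.2 ^+ 2) by ring.
by rewrite hz hw mulr1.
Qed.

Lemma unit_cconj (z : R * R) : unit2 z -> unit2 (cconj z).
Proof. by rewrite /unit2 /cconj /= sqrrN. Qed.

Definition alpha (th : nat -> R * R) (j : nat) := csqrt (cmul (th (2 * j)%N) (th (2 * j).+1)).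
Definition beta (th : nat -> R * R) (j : nat) := cmul (cconj (th (2 * j).+1)) (alpha th j).

Lemma ab_rel (z0 z1 : R * R) : unit2 z0 -> unit2 z1 ->
  let al := csqrt (cmul z0 z1) in let be := cmul (cconj z1) al in
  [/\ cmul be al = z0, cmul (cconj be) al = z1, unit2 al & unit2 be].
Proof.
move=> h0 h1; cbv zeta.
have [hal hu] := csqrtP (unit_cmul h0 h1).
have hbe : unit2 (cmul (cconj z1) (csqrt (cmul z0 z1))) by apply: unit_cmul => //; apply: unit_cconj.
split => //; move: hal hu hbe; case: (csqrt (cmul z0 z1)) => p q.
  case: z0 {h0} => c0 s0; case: z1 h1 => c1 s1; rewrite /unit2 /cmul /cconj /= => h1 [e1 e2] hu _.
  congr (_, _).
    have -> : (c1 * p - - s1 * q) * p - (c1 * q + - s1 * p) * q =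
      c1 * (p * p - q * q) + s1 * (p * q + q * p) by ring.
    rewrite e1 e2.
    have -> : c1 * (c0 * c1 - s0 * s1) + s1 * (c0 * s1 + s0 * c1) = c0 * (c1 ^+ 2 + s1 ^+ 2) by ring.
    by rewrite h1 mulr1.
  have -> : (c1 * p - - s1 * q) * q + (c1 * q + - s1 * p) * p =
    c1 * (p * q + q * p) - s1 * (p * p - q * q) by ring.
  rewrite e1 e2.
  have -> : c1 * (c0 * s1 + s0 * c1) - s1 * (c0 * c1 - s0 * s1) = s0 * (c1 ^+ 2 + s1 ^+ 2) by ring.
  by rewrite h1 mulr1.
case: z0 {h0} => c0 s0; case: z1 h1 => c1 s1; rewrite /unit2 /cmul /cconj /= => h1 [e1 e2] hu _.
congr (_, _).
  have -> : (c1 * p - - s1 * q) * p - - (c1 * q + - s1 * p) * q = c1 * (p ^+ 2 + q ^+ 2) by ring.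
  by rewrite hu mulr1.
have -> : (c1 * p - - s1 * q) * q + - (c1 * q + - s1 * p) * p = s1 * (p ^+ 2 + q ^+ 2) by ring.
by rewrite hu mulr1.
Qed.

End UCR.

End Part6.
Import Part6.

Module Part7.
Local Open Scope ring_scope.

Section UCR2.
Variable R : rcfType.
Local Notation C := (R[i]).
Variable N : nat.
Variable t : 'I_N.

Fixpoint ucr (a n : nat) (th : nat -> R * R) : circuit R N :=
  match n with
  | 0 => [:: G1 t (rotm (th 0%N))]
  | n'.+1 => ucr a.+1 n' (alpha th) ++
             CNOT R (insubd t a) t :: ucr a.+1 n' (beta th) ++ [:: CNOT R (insubd t a) t]
  end.

Lemma size_ucr a n th : (size (ucr a n th) + 2 = 3 * 2 ^ n)%N.
Proof.
elim: n a th => [|n IH] a th //=.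
rewrite size_cat /= size_cat /= expnS.
have h1 := IH a.+1 (alpha th); have h2 := IH a.+1 (beta th); lia.
Qed.

Lemma insubd_val a : (a < N)%N -> val (insubd t a) = a.
Proof. by move=> h; rewrite val_insubd h. Qed.

Lemma rf_cmul (z w : R * R) i j :
  rf (cmul z w) i j = rf z i false * rf w false j + rf z i true * rf w true j.
Proof.
rewrite /rf /cmul; case: i; case: j => /=; rewrite ?(rmorphM, rmorphB, rmorphD, rmorphN) /=; ring.
Qed.

Lemma rf_cconj (z : R * R) i j : rf (cconj z) i j = rf z (~~ i) (~~ j).
Proof. by rewrite /rf /cconj; case: i; case: j => /=; rewrite ?opprK. Qed.

Lemma ucr_ket n : forall a th, (forall j, unit2 (th j)) -> (a + n <= t)%N ->
  forall k, (k < 2 ^ N)%N ->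
  circuit_mx (ucr a n th) *m ket R N k = gate_mx (G1 t (rotm (th (ctl a n k)))) *m ket R N k.
Proof.
elim: n => [|n IH] a th hth han k hk.
  by rewrite ctl_0 /= /circuit_mx /= mulmx1.
rewrite /= circuit_mx_cat circuit_mx_cons cats1 circuit_mx_rcons -!mulmxA.
have hat : (a < t)%N by lia.
have haN : (a < N)%N by apply: ltn_trans hat (ltn_ord t).
have hne : insubd t a != t by apply/eqP => /(congr1 val); rewrite insubd_val // => e; move: hat; rewrite -e ltnn.
have han' : (a.+1 + n <= t)%N by lia.
have hal : forall j, unit2 (alpha th j) by move=> j; have [_ _ ? _] := ab_rel (hth (2 * j)%N) (hth (2 * j).+1).
have hbe : forall j, unit2 (beta th j) by move=> j; have [_ _ _ ?] := ab_rel (hth (2 * j)%N) (hth (2 * j).+1).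
have [e0 e1 _ _] := ab_rel (hth (2 * ctl a.+1 n k)%N) (hth (2 * ctl a.+1 n k).+1).
set j := ctl a.+1 n k in e0 e1.
set kf := flipbit k t.
have hkf : (kf < 2 ^ N)%N by apply: flip_lt.
have hB : forall k', (k' < 2 ^ N)%N -> ctl a.+1 n k' = j ->
  circuit_mx (ucr a.+1 n (beta th)) *m ket R N k' =
  rf (beta th j) (bit k' t) (bit k' t) *: ket R N k' + rf (beta th j) (~~ bit k' t) (bit k' t) *: ket R N (flipbit k' t).
  by move=> k' hk' hj; rewrite IH // G1_ket // !U'_rot hj.
have hjf : ctl a.+1 n kf = j by rewrite /kf ctl_flip.
have hbf : bit kf t = ~~ bit k t by rewrite /kf bit_flip.
have hff : flipbit kf t = k by rewrite /kf flipbitK.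
have hxa : bit kf a = bit k a by rewrite /kf bit_flip_other //; apply/eqP => e; move: hat; rewrite e ltnn.
rewrite IH // G1_ket // !U'_rot -/j -/kf.
rewrite [RHS]G1_ket // !U'_rot ctl_S -/j -/kf.
set Gc := gate_mx (CNOT R (insubd t a) t).
case hx: (bit k a).
- have hC1 : Gc *m ket R N k = ket R N kf by rewrite CNOT_ket // /cnot_map insubd_val // hx.
  have hC2 : Gc *m ket R N kf = ket R N k by rewrite CNOT_ket // /cnot_map insubd_val // hxa hx hff.
  rewrite (mulmxDr Gc) -!scalemxAr hC1 hC2.
  rewrite mulmxDr -!scalemxAr hB // hB // hbf hff negbK.
  rewrite mulmxDr -!scalemxAr !mulmxDr -!scalemxAr hC1 hC2.
  rewrite comb; congr (_ *: _ + _ *: _).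
  + rewrite add1n -e1 rf_cmul !rf_cconj; case: (bit k t) => /=; ring.
  + rewrite add1n -e1 rf_cmul !rf_cconj; case: (bit k t) => /=; ring.
- have hC1 : Gc *m ket R N k = ket R N k by rewrite CNOT_ket // /cnot_map insubd_val // hx.
  have hC2 : Gc *m ket R N kf = ket R N kf by rewrite CNOT_ket // /cnot_map insubd_val // hxa hx.
  rewrite (mulmxDr Gc) -!scalemxAr hC1 hC2.
  rewrite mulmxDr -!scalemxAr hB // hB // hbf hff negbK.
  rewrite mulmxDr -!scalemxAr !mulmxDr -!scalemxAr hC1 hC2.
  rewrite comb; congr (_ *: _ + _ *: _).
  + rewrite add0n -e0 rf_cmul; case: (bit k t) => /=; ring.
  + rewrite add0n -e0 rf_cmul; case: (bit k t) => /=; ring.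
Qed.

End UCR2.

End Part7.
Import Part7.

Module Part8.
Local Open Scope ring_scope.

Lemma sum_split2 (V : nmodType) n (F : nat -> V) :
  \sum_(k < 2 ^ n.+1) F k = \sum_(j < 2 ^ n) F j + \sum_(j < 2 ^ n) F (j + 2 ^ n)%N.
Proof.
rewrite -!(big_mkord xpredT) expnS mul2n -addnn (big_cat_nat _ (leq_addr _ _)) //=.
congr (_ + _).
by rewrite -{1}(add0n (2 ^ n)%N) big_addn addnK big_mkord.
Qed.

Section SP.
Variable R : rcfType.
Local Notation C := (R[i]).
Variable N : nat.
Variable d : 'I_N.

Lemma ucr_ok (t : 'I_N) a n th : (forall j, unit2 (th j)) -> (a + n <= t)%N ->
  circuit_ok (ucr (R:=R) t a n th).
Proof.
elim: n a th => [|n IH] a th hth han /=.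
  by split => //; apply: rotm_unitary.
have hat : (a < t)%N by lia.
have haN : (a < N)%N by apply: ltn_trans hat (ltn_ord t).
have hne : insubd t a <> t.
  by move/(congr1 val); rewrite insubd_val // => e; move: hat; rewrite -e ltnn.
have hal : forall j, unit2 (alpha th j) by move=> j; have [_ _ ? _] := ab_rel (hth (2 * j)%N) (hth (2 * j).+1).
have hbe : forall j, unit2 (beta th j) by move=> j; have [_ _ _ ?] := ab_rel (hth (2 * j)%N) (hth (2 * j).+1).
apply/circuit_ok_cat; split; first by apply: IH => //; lia.
split => //; apply/circuit_ok_cat; split; first by apply: IH => //; lia.
by [].
Qed.

Definition wv (n : nat) (v : nat -> R) (j : nat) : R := Num.sqrt (v j ^+ 2 + v (j + 2 ^ n)%N ^+ 2).
Definition thv (n : nat) (v : nat -> R) (j : nat) : R * R :=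
  if wv n v j == 0 then (1, 0) else (v j / wv n v j, v (j + 2 ^ n)%N / wv n v j).

Fixpoint sp (n : nat) (v : nat -> R) : circuit R N :=
  match n with
  | 0 => [::]
  | n'.+1 => sp n' (wv n' v) ++ ucr (R:=R) (insubd d n') 0 n' (thv n' v)
  end.

Lemma size_sp n v : (size (sp n v) <= 3 * 2 ^ n)%N.
Proof.
elim: n v => [|n IH] v //=.
rewrite size_cat expnS; have := IH (wv n v); have := size_ucr (insubd d n) 0 n (thv n v); lia.
Qed.

Lemma thv_unit n v j : unit2 (thv n v j).
Proof.
rewrite /thv /unit2; case: eqP => [_|hw] /=; first by rewrite expr1n expr0n addr0.
have hw2 : wv n v j ^+ 2 = v j ^+ 2 + v (j + 2 ^ n)%N ^+ 2 by rewrite sqr_sqrtr // addr_ge0 // sqr_ge0.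
rewrite !expr_div_n -mulrDl -hw2 divff // expf_neq0 //; exact/eqP.
Qed.

Lemma wv_thv n v j : wv n v j * (thv n v j).1 = v j /\ wv n v j * (thv n v j).2 = v (j + 2 ^ n)%N.
Proof.
rewrite /thv; case: eqP => [hw|hw] /=.
  move: hw; rewrite /wv => /eqP; rewrite sqrtr_eq0 => hle.
  have h0 : v j ^+ 2 + v (j + 2 ^ n)%N ^+ 2 = 0 by apply/eqP; rewrite eq_le hle addr_ge0 ?sqr_ge0.
  have ha : v j = 0 by apply/eqP; rewrite -sqrf_eq0 eq_le sqr_ge0 -h0 lerDl sqr_ge0.
  have hb : v (j + 2 ^ n)%N = 0 by apply/eqP; rewrite -sqrf_eq0 eq_le sqr_ge0 -h0 lerDr sqr_ge0.
  by split; rewrite ?mulr0 // mulr1 /wv ha hb expr2 mul0r addr0 sqrtr0.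
by split; rewrite mulrC divfK //; apply/eqP.
Qed.

Lemma sp_ket n (v : nat -> R) : (n <= N)%N -> \sum_(k < 2 ^ n) v k ^+ 2 = 1 -> (n = 0%N -> 0 <= v 0%N) ->
  circuit_mx (sp n v) *m ket R N 0 = \sum_(k < 2 ^ n) (v k)%:C%C *: ket R N k.
Proof.
elim: n v => [|n IH] v hn hv hv0.
  rewrite big_ord1 in hv; rewrite big_ord1 /= mul1mx.
  have -> : v 0%N = 1.
    have := hv0 erefl; move: hv; rewrite expr2 => hv h0.
    have : (v 0%N - 1) * (v 0%N + 1) = 0 by rewrite -subr_sqr expr1n expr2 hv subrr.
    move/eqP; rewrite mulf_eq0 => /orP [/eqP h|/eqP h]; first by apply/eqP; rewrite -subr_eq0 h.
    by exfalso; lra.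
  by rewrite scale1r.
have hnN : (n < N)%N by [].
rewrite /= circuit_mx_cat -mulmxA IH; first last.
- by move=> ->; apply: sqrtr_ge0.
- rewrite -hv (sum_split2 _ (fun k => v k ^+ 2)) -big_split /=; apply: eq_bigr => j _.
  by rewrite /wv sqr_sqrtr // addr_ge0 // sqr_ge0.
- by apply: ltnW.
rewrite mulmx_sumr (sum_split2 _ (fun k => (v k)%:C%C *: ket R N k)) -big_split /=; apply: eq_bigr => j _.
have hj : (j < 2 ^ N)%N by apply: (leq_trans (ltn_ord j)); rewrite leq_exp2l // ltnW.
have htv : val (insubd d n) = n by rewrite insubd_val.
have hth : forall j, unit2 (thv n v j) by move=> ?; apply: thv_unit.
have han : (0 + n <= insubd d n)%N by rewrite htv add0n.
rewrite -scalemxAr ucr_ket //.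
  rewrite G1_ket // !U'_rot htv (bit_small (ltn_ord j)) flip_small // ctl_small //.
  rewrite scalerDr !scalerA /rf /=.
  have [e1 e2] := wv_thv n v j.
  by rewrite -!rmorphM /= e1 e2.
Qed.

Lemma sp_ok n v : (n <= N)%N -> circuit_ok (sp n v).
Proof.
elim: n v => [|n IH] v hn //=.
apply/circuit_ok_cat; split; first by apply: IH; apply: ltnW.
apply: ucr_ok; first by move=> ?; apply: thv_unit.
by rewrite insubd_val // add0n.
Qed.

End SP.

End Part8.
Import Part8.

Module Part9.
Local Open Scope ring_scope.

Section Final.
Variable R : rcfType.
Local Notation C := (R[i]).

Definition fext M (f : 'I_M -> R) (k : nat) : R :=
  match (insub k : option 'I_M) with Some i => f i | None => 0 end.

Lemma sum_fext (V : nmodType) M n (f : 'I_M -> R) (g : nat -> R -> V) :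
  (M <= 2 ^ n)%N -> (forall k, g k 0 = 0) ->
  \sum_(k < 2 ^ n) g k (fext f k) = \sum_(l < M) g l (f l).
Proof.
move=> hM hg.
have -> : \sum_(l < M) g l (f l) = \sum_(l < M) g l (fext f l).
  by apply: eq_bigr => l _; rewrite /fext valK.
rewrite (big_ord_widen _ (fun k => g k (fext f k)) hM) [RHS]big_mkcond /=.
apply: eq_bigr => k _; case: ifP => // hk.
by rewrite /fext insubN ?hk.
Qed.

Lemma prep_exists m (d : 'I_m) (v : nat -> R) : \sum_(k < 2 ^ m) v k ^+ 2 = 1 ->
  exists c : circuit R m, [/\ circuit_ok c,
    circuit_mx c *m ket R m 0 = \sum_(k < 2 ^ m) (v k)%:C%C *: ket R m k &
    (size c <= 3 * 2 ^ m)%N].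
Proof.
move=> hv; exists (sp (R:=R) d m v); split.
- exact: sp_ok.
- apply: sp_ket => // hm0; by case: d; rewrite hm0.
- exact: size_sp.
Qed.

End Final.


End Part9.
Import Part9.

Local Open Scope ring_scope.

Theorem lemma5 (R : rcfType) :
  exists K : R, 0 < K /\
  forall (M : nat) (h : 'I_M -> R),
    (0 < M)%N -> ~~ odd M -> wavelet_filter h ->
    let m := up_log 2 M in
    let hs := \sum_(l < M) `|h l| in
    (* (i) LINPREP with O(M log2 M) gates and m borrowed qubits *)
    (exists (LINPREP : 'M[R[i]]_(2 ^ m)) (c : circuit R (m + m)),
        is_unitary_mx LINPREP /\
        LINPREP *m ket R m 0 = \sum_(l < M) (real_complex R (h l)) *: ket R m l /\
        circuit_ok c /\ implements_borrowed c LINPREP /\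
        (size c)%:R <= K * (M * m)%:R) /\
    (* (ii) PREP with O(M^{3/2}) gates and one ancilla *)
    (exists (PREP : 'M[R[i]]_(2 ^ m)) (c : circuit R (m + 1)),
        is_unitary_mx PREP /\
        PREP *m ket R m 0 = \sum_(l < M)
           (real_complex R (Num.sqrt `|h l| / Num.sqrt hs)) *: ket R m l /\
        circuit_ok c /\ implements_ancilla c PREP /\
        (size c)%:R <= K * M%:R * Num.sqrt M%:R) /\
    (* (ii) UNPREP with O(M^{3/2}) gates and one ancilla *)
    (exists (UNPREP : 'M[R[i]]_(2 ^ m)) (c : circuit R (m + 1)),
        is_unitary_mx UNPREP /\
        adjmx UNPREP *m ket R m 0 = \sum_(l < M)
           (real_complex R (Num.sg (h l) * Num.sqrt `|h l| / Num.sqrt hs))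
             *: ket R m l /\
        circuit_ok c /\ implements_ancilla c UNPREP /\
        (size c)%:R <= K * M%:R * Num.sqrt M%:R).
Proof.
exists 6; split => // M h hM hodd [hsum hsq] m hs.
have hM2 : (1 < M)%N by case: M hM hodd h {hsum hsq m hs} => [|[|M]].
have hm : (0 < m)%N by rewrite /m up_log_gt0 hM2.
pose d : 'I_m := Ordinal hm.
have hMm : (M <= 2 ^ m)%N by apply: up_logP.
have h2m : (2 ^ m < 2 * M)%N.
  have := up_log_gtn (isT : (1 < 2)%N) hM2; rewrite -/m.
  by rewrite -[in X in _ -> X](prednK hm) expnS ltn_mul2l.
have hsize : forall c : circuit R m, (size c <= 3 * 2 ^ m)%N -> (size c <= 6 * M)%N.
  move=> c hc; apply: (leq_trans hc); lia.
have hsqrtM : 1 <= Num.sqrt (M%:R : R).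
  have h1M : (1%:R <= M%:R :> R) by rewrite ler_nat.
  by rewrite -{1}sqrtr1 ler_sqrt ?ler0n.
have bound2 : forall c : circuit R m, (size c <= 3 * 2 ^ m)%N ->
    (size c)%:R <= 6 * M%:R * Num.sqrt (M%:R : R).
  move=> c hc; apply: (le_trans (y := 6 * M%:R)).
    by rewrite -natrM ler_nat; apply: hsize.
  by rewrite -{1}[6 * M%:R]mulr1 ler_wpM2l // mulr_ge0.
have hhs : 0 < hs.
  have : `|\sum_(l < M) h l| <= hs by apply: ler_norm_sum.
  rewrite hsum ger0_norm ?sqrtr_ge0 => [hle|//]; apply: lt_le_trans hle.
  by rewrite sqrtr_gt0.
have sumC : forall f : 'I_M -> R, \sum_(k < 2 ^ m) (fext f k)%:C%C *: ket R m k = \sum_(l < M) (f l)%:C%C *: ket R m l.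
  move=> f; apply: (@sum_fext R _ M m f (fun (k : nat) (x : R) => x%:C%C *: ket R m k) hMm).
  by move=> k; rewrite scale0r.
have sumS : forall f : 'I_M -> R, \sum_(k < 2 ^ m) fext f k ^+ 2 = \sum_(l < M) f l ^+ 2.
  move=> f; apply: (@sum_fext R _ M m f (fun (_ : nat) (x : R) => x ^+ 2) hMm).
  by move=> k; rewrite expr0n.
split; [|split].
-
  have hv : \sum_(k < 2 ^ m) fext h k ^+ 2 = 1 by rewrite sumS.
  case: (prep_exists d hv) => c [hok hc hsz].
  exists (circuit_mx c), (map (@lift_gate R m m) c); split; first exact: circuit_unitary.
  split; first by rewrite hc sumC.
  split; first exact: lift_ok.
  split; first exact: lift_implements_borrowed.
  rewrite size_map -natrM ler_nat.
  apply: (leq_trans (hsize _ hsz)); rewrite leq_mul2l /=; by apply: leq_pmulr.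
-
  pose f := fun l : 'I_M => Num.sqrt `|h l| / Num.sqrt hs.
  have hv : \sum_(k < 2 ^ m) fext f k ^+ 2 = 1.
    rewrite sumS /f.
    under eq_bigr => l _ do rewrite expr_div_n !sqr_sqrtr ?normr_ge0 ?(ltW hhs) //.
    by rewrite -mulr_suml divff // gt_eqF.
  case: (prep_exists d hv) => c [hok hc hsz].
  exists (circuit_mx c), (map (@lift_gate R m 1) c); split; first exact: circuit_unitary.
  split; first by rewrite hc sumC.
  split; first exact: lift_ok.
  split; first exact: lift_implements_ancilla.
  by rewrite size_map; apply: bound2.
-
  pose f := fun l : 'I_M => Num.sg (h l) * Num.sqrt `|h l| / Num.sqrt hs.
  have hv : \sum_(k < 2 ^ m) fext f k ^+ 2 = 1.
    rewrite sumS /f.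
    under eq_bigr => l _ do rewrite expr_div_n exprMn sqr_sg !sqr_sqrtr ?normr_ge0 ?(ltW hhs) //.
    have -> : \sum_(l < M) ((h l != 0)%:R * `|h l| / hs) = \sum_(l < M) (`|h l| / hs).
      by apply: eq_bigr => l _; case: eqP => [->|_]; rewrite ?normr0 ?mul1r ?mul0r.
    by rewrite -mulr_suml divff // gt_eqF.
  case: (prep_exists d hv) => c [hok hc hsz].
  exists (adjmx (circuit_mx c)), (map (@lift_gate R m 1) (adj_circ c)).
  split; first by apply: unitary_adj; apply: circuit_unitary.
  split; first by rewrite adjmxK hc sumC.
  split; first by apply: lift_ok; apply: adj_circ_ok.
  split; first by rewrite -adj_circ_mx //; apply: lift_implements_ancilla.
  by rewrite size_map size_adj_circ; apply: bound2.
Qed.
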